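(* Let $\mathcal{S}=\langle\mathcal{L},\vdash\rangle$ be a logic whose signature contains a unary operator $\neg$, and let $\varrho\subseteq\mathcal{P}(\mathcal{L})\times\mathcal{L}$ have finite reach. Then there exist $\alpha,\beta\in\mathcal{L}$ with $\{\alpha,\neg\alpha\}\not\vdash^\varrho\beta$, and there exist $\alpha,\beta\in\mathcal{L}$ with $\{\alpha,\neg\alpha\}\not\vdash^{p\varrho}\beta$; i.e., both companions are paraconsistent with respect to $\neg$.
   Context: A logic is a pair $\langle\mathcal{L},\vdash\rangle$ where $\mathcal{L}$ is the formula algebra over a nonempty set of variables $V$ of some finite signature and $\vdash\subseteq\mathcal{P}(\mathcal{L})\times\mathcal{L}$ is arbitrary. For $\varrho\subseteq\mathcal{P}(\mathcal{L})\times\mathcal{L}$: $\Gamma\vdash^\varrho\alpha$ iff there is $\Delta\subseteq\Gamma$ with $(\Delta,\alpha)\in\varrho$ and $\Delta\vdash\alpha$; $\Gamma\vdash^{p\varrho}\alpha$ iff there is a nonempty $\Delta\subseteq\Gamma$ with $(\Delta,\alpha)\in\varrho$ and $\Delta\vdash\alpha$. A relation $\varrho\subseteq\mathcal{P}(\mathcal{L})\times\mathcal{L}$ has finite reach if for every $\Delta\subseteq\mathcal{L}$ the set $\{\alpha\mid(\Delta,\alpha)\in\varrho\}$ is finite. *)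

(* Defs.v *)
From HB Require Import structures.
From mathcomp Require Import all_boot.
From mathcomp Require Import boolp classical_sets cardinality.

Set Implicit Arguments.
Unset Strict Implicit.
Unset Printing Implicit Defensive.

Local Open Scope classical_set_scope.

Inductive formula (V : Type) (F : finType) (ar : F -> nat) : Type :=
  | Var : V -> formula V ar
  | App : forall f : F, ('I_(ar f) -> formula V ar) -> formula V ar.

Arguments Var {V F ar} _.
Arguments App {V F ar} f _.

(* The unary connective built from a symbol neg (intended: ar neg = 1). *)
Definition negf (V : Type) (F : finType) (ar : F -> nat) (neg : F)
  (a : formula V ar) : formula V ar := App neg (fun _ => a).

Definition finite_reach (L : Type) (rho : set L -> L -> Prop) : Prop :=
  forall D : set L, finite_set [set a | rho D a].

Definition companion (L : Type) (rho vdash : set L -> L -> Prop)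
  (G : set L) (a : L) : Prop :=
  exists D : set L, D `<=` G /\ rho D a /\ vdash D a.

Definition pcompanion (L : Type) (rho vdash : set L -> L -> Prop)
  (G : set L) (a : L) : Prop :=
  exists D : set L, D !=set0 /\ D `<=` G /\ rho D a /\ vdash D a.

(* Main.v *)
Require Import Defs.
From mathcomp Require Import all_boot.
From mathcomp Require Import boolp classical_sets cardinality.
From Stdlib Require Import Eqdep_dec.
Local Open Scope classical_set_scope.

Lemma negf_inj (V : Type) (F : finType) (ar : F -> nat) (neg : F)
  (Hneg : ar neg = 1%N) (x y : formula V ar) : negf neg x = negf neg y -> x = y.
Proof.
rewrite /negf => H; injection H => H'.
have := inj_pair2_eq_dec F (fun p q => eq_comparable p q) _ _ _ _ H'.
move=> E; have i : 'I_(ar neg) by rewrite Hneg; exact: ord0.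
exact: (f_equal (fun g => g i) E).
Qed.

Theorem corollary3p16 (V : Type) (hV : inhabited V) (F : finType) (ar : F -> nat)
  (neg : F) (Hneg : ar neg = 1%N)
  (vdash : set (formula V ar) -> formula V ar -> Prop)
  (rho : set (formula V ar) -> formula V ar -> Prop)
  (hrho : finite_reach rho) :
  (exists a b : formula V ar, ~ companion rho vdash [set a; negf neg a] b) /\
  (exists a b : formula V ar, ~ pcompanion rho vdash [set a; negf neg a] b).
Proof.
case: hV => v.
set a : formula V ar := Var v.
set na := negf neg a.
pose R D := [set x | rho D x].
pose S := R set0 `|` R [set a] `|` R [set na] `|` R [set a; na].
have fS : finite_set S by rewrite /S !finite_setU; do !split; apply: hrho.
pose f n := iter n (negf neg) a.
have finj : injective f.
  elim=> [|m IH] [|n] //=; rewrite /f /=.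
  by move/(@negf_inj _ _ _ _ Hneg _ _)/IH => ->.
have [n Sn] : exists n, ~ S (f n).
  apply/not_existsP => Hall.
  have : finite_set (f @^-1` S) by apply: finite_preimage => //; move=> x y _ _; apply: finj.
  have -> : f @^-1` S = setT.
    by apply/seteqP; split => x // _; have := Hall x; case: (pselect (S (f x))).
  exact: infinite_nat.
have key : forall D, D `<=` [set a; na] -> ~ rho D (f n).
  move=> D sD rD; apply: Sn.
  case: (pselect (D a)) => Da; case: (pselect (D na)) => Dna.
  - have E : D = [set a; na].
      by apply/seteqP; split => //; move=> x [->|->].
    by rewrite E in rD; right.
  - have E : D = [set a].
      apply/seteqP; split => x; last by move=> ->.
      move=> Dx; case: (sD x Dx) => Ex; first (by []); by rewrite Ex in Dx.
    by rewrite E in rD; left; left; right.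
  - have E : D = [set na].
      apply/seteqP; split => x; last by move=> ->.
      move=> Dx; case: (sD x Dx) => Ex; last (by []); by rewrite Ex in Dx.
    by rewrite E in rD; left; right.
  - have E : D = set0.
      apply/seteqP; split => x //.
      move=> Dx; by case: (sD x Dx) => Ex; rewrite Ex in Dx.
    by rewrite E in rD; left; left; left.
split; exists a, (f n).
- by case=> D [sD [rD _]]; exact: key sD rD.
- by case=> D [_ [sD [rD _]]]; exact: key sD rD.
Qed.
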